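(* For every sufficiently small fixed $\varepsilon>0$ and $p=n^{-(2/5+\varepsilon)}$, asymptotically almost surely $G\sim\mathbb{G}(n,p)$ does not contain pairwise edge-disjoint $K_4$-tiled subgraphs $H_1,\dots,H_k$ with $k\ge 2$ and $|V(H_i)\cap V(H_{i+1})|=1$ for every $i\in[k-1]$, such that $\phi(H_1)\ge 6$, $\phi(H_k)\ge 6$, and $\phi(H_i)\ge 3$ for every $2\le i\le k-1$, where $\phi(H)=8-5v(H)+2e(H)$.
   Context: A graph is $K_4$-tiled if every edge lies in a copy of $K_4$ and the auxiliary graph whose vertices are the copies of $K_4$ (two adjacent iff they share an edge) is connected. *)

(* Defs.v *)
From HB Require Import structures.
From mathcomp Require Import all_boot all_order all_algebra.
From mathcomp Require Import all_classical all_reals all_analysis.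
Set Implicit Arguments. Unset Strict Implicit. Unset Printing Implicit Defensive.
Import Order.TTheory GRing.Theory Num.Theory.
Local Open Scope ring_scope.

(* Simple graphs on vertex set 'I_n are represented by their edge sets:
   an edge is a 2-element subset of 'I_n. *)
Definition pairs (n : nat) : {set {set 'I_n}} := [set e : {set 'I_n} | #|e| == 2%N].

Definition clique_edges (n : nat) (Q : {set 'I_n}) : {set {set 'I_n}} :=
  [set e in pairs n | e \subset Q].

Definition verts (n : nat) (H : {set {set 'I_n}}) : {set 'I_n} :=
  \bigcup_(e in H) e.

Definition K4_copies (n : nat) (H : {set {set 'I_n}}) : {set {set 'I_n}} :=
  [set Q : {set 'I_n} | (#|Q| == 4%N) && (clique_edges Q \subset H)].

Definition K4_adj (n : nat) (H : {set {set 'I_n}}) : rel {set 'I_n} :=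
  fun Q Q' => [&& Q \in K4_copies H, Q' \in K4_copies H & (2 <= #|Q :&: Q'|)%N].

Definition K4_tiled (n : nat) (H : {set {set 'I_n}}) : Prop :=
  (forall e, e \in H -> exists2 Q, Q \in K4_copies H & e \subset Q) /\
  (forall Q Q', Q \in K4_copies H -> Q' \in K4_copies H -> connect (K4_adj H) Q Q').

Definition phi (n : nat) (H : {set {set 'I_n}}) : int :=
  8 - 5 * (#|verts H|)%:Z + 2 * (#|H|)%:Z.

Definition has_bad_chain (n : nat) (G : {set {set 'I_n}}) : Prop :=
  exists (k : nat) (Hs : nat -> {set {set 'I_n}}),
    [/\ (2 <= k)%N,
        (forall i, (i < k)%N -> Hs i \subset G /\ K4_tiled (Hs i)),
        (forall i j, (i < k)%N -> (j < k)%N -> i != j -> [disjoint Hs i & Hs j]),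
        (forall i, (i.+1 < k)%N -> #|verts (Hs i) :&: verts (Hs i.+1)| = 1%N) &
        [/\ 6 <= phi (Hs 0%N), 6 <= phi (Hs k.-1) &
            (forall i, (0 < i)%N -> (i < k.-1)%N -> 3 <= phi (Hs i))]].

Definition gnp_prob (R : realType) (n : nat) (p : R) (P : {set {set 'I_n}} -> Prop) : R :=
  \sum_(E in powerset (pairs n) | `[< P E >])
     p ^+ #|E| * (1 - p) ^+ (#|pairs n| - #|E|).

(* Main.v *)
Require Import Defs.
From HB Require Import structures.
From mathcomp Require Import all_boot all_order all_algebra.
From mathcomp Require Import all_classical all_reals all_analysis.
Import Order.TTheory GRing.Theory Num.Theory numFieldNormedType.Exports.
From mathcomp Require Import zify.
From mathcomp Require Import fintype finset bigop.
From mathcomp Require Import lra.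
Set Implicit Arguments. Unset Strict Implicit. Unset Printing Implicit Defensive.

Lemma verts_sub n (F : {set {set 'I_n}}) e : e \in F -> e \subset verts F.
Proof. move=> he; apply/subsetP => x hx; rewrite /verts; apply/bigcupP; by exists e. Qed.

Lemma vertsP n (F : {set {set 'I_n}}) x :
  reflect (exists2 e, e \in F & x \in e) (x \in verts F).
Proof. exact: bigcupP. Qed.

Lemma vertsU n (F1 F2 : {set {set 'I_n}}) : verts (F1 :|: F2) = verts F1 :|: verts F2.
Proof.
apply/setP=> x; rewrite inE; apply/vertsP/orP.
  by case=> e; rewrite inE => /orP[] he hx; [left|right]; apply/vertsP; exists e.
by case=> /vertsP[e he hx]; exists e; rewrite // inE he ?orbT.
Qed.

Lemma verts_mono n (F1 F2 : {set {set 'I_n}}) : F1 \subset F2 -> verts F1 \subset verts F2.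
Proof.
move=> /subsetP s; apply/subsetP=> x /vertsP[e he hx]; apply/vertsP; exists e => //.
exact: s.
Qed.

Lemma card_clique n (Q : {set 'I_n}) : #|clique_edges Q| = 'C(#|Q|, 2).
Proof.
rewrite -cards_draws; apply: eq_card => e; rewrite !inE andbC.
done.
Qed.

Definition Wof n (S : {set {set 'I_n}}) : {set 'I_n} := \bigcup_(Q in S) Q.
Definition Eof n (S : {set {set 'I_n}}) : {set {set 'I_n}} := \bigcup_(Q in S) clique_edges Q.

Lemma Eof_sub n (H S : {set {set 'I_n}}) : S \subset K4_copies H -> Eof S \subset H.
Proof.
move=> /subsetP sS; apply/subsetP => e /bigcupP[Q /sS]; rewrite inE => /andP[_ /subsetP]; apply.
Qed.

Lemma clique_sub n (Q : {set 'I_n}) e : e \in clique_edges Q -> e \subset Q.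
Proof. by rewrite inE => /andP[]. Qed.

Lemma verts_clique n (Q : {set 'I_n}) : (2 <= #|Q|)%N -> verts (clique_edges Q) = Q.
Proof.
move=> hQ; apply/setP=> x; apply/vertsP/idP.
  by case=> e /clique_sub /subsetP; apply.
move=> xQ.
have : (1 < #|Q :\ x|)%N || (0 < #|Q :\ x|)%N.
  by move: hQ; rewrite (cardsD1 x Q) xQ /=; case: #|_| => //= -[|]//; rewrite orbT.
have : exists y, y \in Q :\ x.
  apply/set0Pn; rewrite -card_gt0; move: hQ; rewrite (cardsD1 x Q) xQ /=.
  by case: #|_|.
case=> y; rewrite !inE => /andP[yx yQ] _.
exists [set x; y]; last by rewrite !inE eqxx.
rewrite !inE cards2 (eq_sym x y) yx /=; apply/subsetP => z; rewrite !inE.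
by case/orP=> /eqP->.
Qed.

Lemma Eof_W n (S : {set {set 'I_n}}) e : e \in Eof S -> e \subset Wof S.
Proof.
move=> /bigcupP[Q QS /clique_sub /subsetP h]; apply/subsetP => x /h xQ.
by apply/bigcupP; exists Q.
Qed.

Lemma verts_Eof n (S : {set {set 'I_n}}) :
  (forall Q, Q \in S -> 2 <= #|Q|)%N -> verts (Eof S) = Wof S.
Proof.
move=> h2; apply/setP=> x; apply/idP/idP.
  by move=> /vertsP[e he]; apply/subsetP/Eof_W.
move=> /bigcupP[Q QS xQ]; rewrite -(verts_clique (h2 _ QS)) in xQ.
move: xQ => /vertsP[e he hx]; apply/vertsP; exists e => //.
by apply/bigcupP; exists Q.
Qed.

Lemma grow_step n (S : {set {set 'I_n}}) (Q : {set 'I_n}) :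
  #|Q| = 4 -> Q \notin S -> (2 <= #|Q :&: Wof S|)%N ->
  (5 * #|Wof S| <= 2 * #|Eof S| + 8)%N ->
  (5 * #|Wof (Q |: S)| <= 2 * #|Eof (Q |: S)| + 8)%N /\ (#|Wof (Q |: S)| <= #|Wof S| + 2)%N.
Proof.
move=> hQ QS hb hinv.
have WU : Wof (Q |: S) = Q :|: Wof S by rewrite /Wof big_setU1.
have EU : Eof (Q |: S) = clique_edges Q :|: Eof S by rewrite /Eof big_setU1.
rewrite WU EU.
have c1 := cardsUI Q (Wof S).
have c2 := cardsUI (clique_edges Q) (Eof S).
have sub : clique_edges Q :&: Eof S \subset clique_edges (Q :&: Wof S).
  apply/subsetP => e; rewrite inE => /andP[eQ eE]; move: eQ; rewrite !inE => /andP[-> eQ] /=.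
  by rewrite subsetI eQ (Eof_W eE).
have c3 := subset_leq_card sub.
rewrite card_clique in c3; rewrite card_clique hQ in c2.
have hb4 : (#|Q :&: Wof S| <= 4)%N by rewrite -hQ subset_leq_card // subsetIl.
rewrite hQ in c1.
move: c2; have -> : 'C(4, 2) = 6 by [].
move=> c2.
set b := #|Q :&: Wof S| in c1 c3 hb hb4.
have : b = 2 \/ b = 3 \/ b = 4 by lia.
case=> [hb'|[hb'|hb']]; rewrite hb' in c3.
- move: c3; have -> : 'C(2, 2) = 1 by [].
  move=> c3; split; lia.
- move: c3; have -> : 'C(3, 2) = 3 by [].
  move=> c3; split; lia.
- move: c3; have -> : 'C(4, 2) = 6 by [].
  move=> c3; split; lia.
Qed.

Lemma exists_adj n (H S : {set {set 'I_n}}) (Q0 : {set 'I_n}) :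
  K4_tiled H -> S \subset K4_copies H -> Q0 \in S -> S != K4_copies H ->
  exists Q, [/\ Q \in K4_copies H, Q \notin S & (2 <= #|Q :&: Wof S|)%N].
Proof.
move=> [_ hconn] sS Q0S neq.
case: (boolP [exists Q in K4_copies H :\: S, [exists Q' in S, 2 <= #|Q' :&: Q|]]).
  move=> /existsP[Q /andP[]]; rewrite inE => /andP[QS QC] /existsP[Q' /andP[Q'S hQ']].
  exists Q; split => //; apply: leq_trans hQ' _; apply: subset_leq_card.
  rewrite setIC; apply: setIS; apply/subsetP => x xQ'; apply/bigcupP; by exists Q'.
move=> /existsPn hno.
have [Q1 Q1C Q1S] : exists2 Q1, Q1 \in K4_copies H & Q1 \notin S.
  have : ~~ (K4_copies H \subset S).
    by apply: contra neq => h; rewrite eqEsubset sS h.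
  by move/subsetPn => [Q1 h1 h2]; exists Q1.
have cl : closed_mem (K4_adj H) (mem S).
  move=> x y /and3P[xC yC hxy].
  case xS: (x \in S); case yS: (y \in S) => //.
    have := hno y; rewrite inE yS yC /=; case/existsP; exists x; by rewrite xS.
  have := hno x; rewrite inE xS xC /=; case/existsP; exists y; by rewrite yS setIC.
have := closed_connect cl (hconn _ _ (subsetP sS _ Q0S) Q1C).
by rewrite Q0S (negbTE Q1S).
Qed.

Lemma grow n (H : {set {set 'I_n}}) B :
  K4_tiled H -> (4 <= B)%N -> (B < #|verts H|)%N ->
  exists F : {set {set 'I_n}}, [/\ F \subset H, (B < #|verts F|)%N, (#|verts F| <= B + 2)%N &
                (5 * #|verts F| <= 2 * #|F| + 8)%N].
Proof.
move=> tH hB hv.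
have [e eH] : exists e, e \in H.
  have : (0 < #|verts H|)%N by lia.
  by rewrite card_gt0 => /set0Pn[x /vertsP[e eH _]]; exists e.
have [Q0 Q0C _] := tH.1 e eH.
set C := K4_copies H.
have c4 Q : Q \in C -> #|Q| = 4 by rewrite inE => /andP[/eqP].
have c2 (S : {set {set 'I_n}}) : S \subset C -> forall Q, Q \in S -> (2 <= #|Q|)%N.
  move=> sS Q QS; have QC : Q \in C by move: sS => /subsetP; apply.
  by rewrite c4.
pose inv (S : {set {set 'I_n}}) := (5 * #|Wof S| <= 2 * #|Eof S| + 8)%N.
have key : forall j, (1 <= j)%N -> (j <= #|C|)%N ->
   (exists S : {set {set 'I_n}}, [/\ S \subset C, Q0 \in S, #|S| = j, inv S & (#|Wof S| <= B)%N]) \/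
   (exists S : {set {set 'I_n}}, [/\ S \subset C, Q0 \in S, inv S, (B < #|Wof S|)%N & (#|Wof S| <= B + 2)%N]).
  elim=> [//|j IH] _ hj.
  case: j IH hj => [_ _|j IH hj].
    left; exists [set Q0]; rewrite sub1set Q0C set11 cards1; split=> //.
      by rewrite /inv /Wof /Eof !big_set1 card_clique c4.
    by rewrite /Wof big_set1 c4.
  case: (IH isT (ltnW hj)) => [[S [sS Q0S cS iS wS]] | r]; last by right.
  have neq : S != C by apply/eqP => e'; rewrite e' in cS; lia.
  have [Q [QC QS hQ]] := exists_adj tH sS Q0S neq.
  have [i' w'] := grow_step (c4 _ QC) QS hQ iS.
  have sS' : Q |: S \subset C by rewrite subUset sub1set QC sS.
  case: (leqP #|Wof (Q |: S)| B) => hw.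
    left; exists (Q |: S); split.
    - exact: sS'.
    - by rewrite inE Q0S orbT.
    - by rewrite cardsU1 QS cS.
    - exact: i'.
    - exact: hw.
  right; exists (Q |: S); split.
  - exact: sS'.
  - by rewrite inE Q0S orbT.
  - exact: i'.
  - exact: hw.
  - by apply: (leq_trans w'); rewrite leq_add2r.
have hC : (1 <= #|C|)%N by rewrite card_gt0; apply/set0Pn; exists Q0.
case: (key _ hC (leqnn _)) => [[S [sS _ cS _ wS]] | [S [sS _ iS w1 w2]]].
  have eSC : S = C by apply/eqP; rewrite eqEcard sS cS leqnn.
  exfalso; have : verts H \subset Wof C.
    apply/subsetP => x /vertsP[e' e'H xe'].
    have [Q QC eQ] := tH.1 e' e'H; apply/bigcupP; exists Q => //.
    exact: (subsetP eQ).
  by move=> /subset_leq_card; rewrite -eSC; lia.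
exists (Eof S); rewrite verts_Eof; last exact: c2.
by split => //; exact: Eof_sub.
Qed.

Ltac gen_cards := repeat match goal with
 | |- context [ card ?A ] => let x := fresh "cx" in set x := card A in *; clearbody x
 | H : context [ card ?A ] |- _ => let x := fresh "cx" in set x := card A in *; clearbody x
end.

Fixpoint Upre n (Hs : nat -> {set {set 'I_n}}) (j : nat) : {set {set 'I_n}} :=
  if j is j'.+1 then Upre Hs j' :|: Hs j' else set0.

Lemma Upre_mem n (Hs : nat -> {set {set 'I_n}}) j (e : {set 'I_n}) :
  e \in Upre Hs j -> exists2 i, (i < j)%N & e \in Hs i.
Proof.
elim: j => [|j IH] /=; first by rewrite inE.
rewrite inE => /orP[/IH[i hi he]|he]; last by exists j.
by exists i => //; apply: ltnW.
Qed.

Lemma Upre_sub n (Hs : nat -> {set {set 'I_n}}) j i : (i < j)%N -> Hs i \subset Upre Hs j.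
Proof.
elim: j => // j IH; rewrite ltnS leq_eqVlt => /orP[/eqP->|/IH h] /=.
  exact: subsetUr.
exact: subset_trans h (subsetUl _ _).
Qed.

Lemma phi_ge n (H : {set {set 'I_n}}) (c : nat) :
  (c%:Z <= phi H)%R -> (5 * #|verts H| + c <= 2 * #|H| + 8)%N.
Proof. rewrite /phi. move: #|verts H| #|H| => a b. lia. Qed.

Lemma no_chain n (G : {set {set 'I_n}}) B M :
  (4 <= B)%N -> (2 * B <= M)%N -> (B + 2 <= M)%N ->
  (forall F : {set {set 'I_n}}, F \subset G -> (#|verts F| <= M)%N ->
     (5 * #|verts F| <= 2 * #|F| + 8)%N -> (#|verts F| <= B)%N) ->
  (forall F : {set {set 'I_n}}, F \subset G -> (#|verts F| <= M)%N -> (5 * #|verts F| < 2 * #|F|)%N -> False) ->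
  ~ has_bad_chain G.
Proof.
move=> hB hM1 hM2 hsmall hneg [k [Hs [hk hsub hdisj hint [h0 hk1 hmid]]]].
have piece i : (i < k)%N -> (#|verts (Hs i)| <= B)%N.
  move=> ik; have [sG tH] := hsub i ik.
  rewrite leqNgt; apply/negP => hv.
  have [F [FH h1 h2 h3]] := grow tH hB hv.
  have FG : F \subset G := subset_trans FH sG.
  have := hsmall F FG (leq_trans h2 hM2) h3; lia.
have Usub j : (j <= k)%N -> Upre Hs j \subset G.
  elim: j => [|j IH] hj /=; first exact: sub0set.
  by rewrite subUset IH ?(ltnW hj) //; exact: (hsub j hj).1.
have Ucard j : (j < k)%N -> #|Upre Hs j.+1| = #|Upre Hs j| + #|Hs j|.
  move=> hj /=; rewrite cardsU; have -> : Upre Hs j :&: Hs j = set0.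
    apply/setP => e; rewrite !inE; apply/negP => /andP[/Upre_mem[i hi he] he'].
    have := hdisj i j (ltn_trans hi hj) hj (negbT (ltn_eqF hi)).
    move/disjoint_setI0 => /setP /(_ e); by rewrite !inE he he'.
  by rewrite cards0 subn0.
have Uverts j : (0 < j)%N -> (j < k)%N ->
    (#|verts (Upre Hs j.+1)| + 1 <= #|verts (Upre Hs j)| + #|verts (Hs j)|)%N.
  move=> j0 hj /=; rewrite vertsU.
  have c := cardsUI (verts (Upre Hs j)) (verts (Hs j)).
  have : (1 <= #|verts (Upre Hs j) :&: verts (Hs j)|)%N.
    have e1 := hint j.-1; rewrite prednK // in e1.
    rewrite -(e1 hj); apply: subset_leq_card; apply: setSI; apply: verts_mono.
    by apply: Upre_sub; rewrite prednK.
  by rewrite -c leq_add2l.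
have main j : (0 < j)%N -> (j < k)%N ->
    (5 * #|verts (Upre Hs j)| <= 2 * #|Upre Hs j| + 2)%N /\ (#|verts (Upre Hs j)| <= B)%N.
  elim: j => [//|j IH] _ hj.
  case: j IH hj => [_ hk1'|j IH hj].
    rewrite /= set0U; split; last exact: piece _ (ltnW hk1').
    have h := phi_ge (c:=6) h0; simpl in h |- *; lia.
  have [i1 i2] := IH isT (ltnW hj).
  have c1 := Ucard j.+1 (ltnW hj).
  have c2 := Uverts j.+1 isT (ltnW hj).
  have p1 := hmid j.+1 isT ltac:(lia).
  have p2 := piece j.+1 (ltnW hj).
  have {p1} p1 := phi_ge (c:=3) p1.
  have q1 : (5 * #|verts (Upre Hs j.+2)| <= 2 * #|Upre Hs j.+2| + 2)%N.
    by simpl in *; lia.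
  split => //.
  apply: hsmall; [exact: Usub _ (ltnW hj) | simpl in *; lia | simpl in *; lia].
case: k hk Hs hsub hdisj hint h0 hk1 hmid piece Usub Ucard Uverts main => [//|[//|k]] _ Hs
  hsub hdisj hint h0 hk1 hmid piece Usub Ucard Uverts main.
have [i1 i2] := main k.+1 isT (ltnSn _).
have c1 := Ucard k.+1 (ltnSn _).
have c2 := Uverts k.+1 isT (ltnSn _).
have p2 := piece k.+1 (ltnSn _).
have p1 := phi_ge (c:=6) hk1.
apply: (hneg (Upre Hs k.+2)); [exact: Usub _ (leqnn _) | simpl in *; lia | simpl in *; lia].
Qed.

Local Open Scope ring_scope.

Lemma sum_subsets (R : comPzRingType) (T : finType) (S : {set T}) (f : nat -> R) :
  \sum_(E in powerset S) f #|E| = \sum_(k < #|S|.+1) f k *+ 'C(#|S|, k).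
Proof.
rewrite (partition_big (fun E : {set T} => inord #|E| : 'I_#|S|.+1) xpredT) //=.
apply: eq_bigr => k _.
have -> : \sum_(i : {set T} | (i \in powerset S) && (inord #|i| == k)) f #|i| =
          \sum_(i in [set E : {set T} | E \subset S & #|E| == k]) f k.
  apply: eq_big => E; rewrite !inE ?powersetE.
    case sE: (E \subset S) => //=.
    have hE : (#|E| < #|S|.+1)%N by rewrite ltnS subset_leq_card.
    apply/eqP/eqP => [<-|->]; first by rewrite inordK.
    by apply: val_inj; rewrite /= inordK.
  rewrite ?inE ?powersetE => /andP[sE /eqP <-].
  have hE : (#|E| < #|S|.+1)%N by rewrite ltnS subset_leq_card.
  by rewrite inordK.
by rewrite sumr_const cards_draws.
Qed.

Lemma sum_subsets_one (R : comPzRingType) (T : finType) (S : {set T}) (p : R) :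
  \sum_(E in powerset S) p ^+ #|E| * (1 - p) ^+ (#|S| - #|E|) = 1.
Proof.
rewrite (sum_subsets S (fun k => p ^+ k * (1 - p) ^+ (#|S| - k))).
transitivity ((1 - p + p) ^+ #|S|); last by rewrite subrK expr1n.
by rewrite exprDn; apply: eq_bigr => k _; rewrite mulrC.
Qed.

Lemma sum_supsets (R : comPzRingType) (T : finType) (S F : {set T}) (p : R) :
  F \subset S ->
  \sum_(E in powerset S | F \subset E) p ^+ #|E| * (1 - p) ^+ (#|S| - #|E|) = p ^+ #|F|.
Proof.
move=> FS.
rewrite (reindex_onto (fun E' : {set T} => E' :|: F) (fun E => E :\: F)); last first.
  move=> E /andP[_ FE]; apply/setP => x; rewrite !inE.
  by case xF: (x \in F) => /=; [rewrite (subsetP FE x xF) | rewrite orbF].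
rewrite (eq_bigl (fun E' => E' \in powerset (S :\: F))); last first.
  move=> E' /=; rewrite !powersetE subsetUr andbT subUset FS andbT.
  rewrite setDUl setDv setU0 subsetD; congr andb.
  by apply/eqP/idP => [/setDidPl|/setDidPl ->].
transitivity (p ^+ #|F| * \sum_(E in powerset (S :\: F))
    p ^+ #|E| * (1 - p) ^+ (#|S :\: F| - #|E|)); last by rewrite sum_subsets_one mulr1.
rewrite mulr_sumr.
apply: eq_bigr => E'; rewrite powersetE subsetD => /andP[_ dis].
rewrite cardsU (disjoint_setI0 dis) cards0 subn0 cardsD (setIidPr FS).
by rewrite (addnC #|E'|) subnDA exprD -mulrA mulrCA.
Qed.

Lemma sum_filter_le (R : numDomainType) (T : finType) (P Q : pred T) (w : T -> R) :
  (forall x, P x -> Q x) -> (forall x, Q x -> 0 <= w x) ->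
  \sum_(x | P x) w x <= \sum_(x | Q x) w x.
Proof.
move=> PQ w0; rewrite [X in X <= _]big_mkcond [X in _ <= X]big_mkcond /=.
apply: ler_sum => x _; case Px: (P x); first by rewrite (PQ x Px).
by case Qx: (Q x) => //; exact: w0.
Qed.

Definition wgt (R : numDomainType) (n : nat) (p : R) (E : {set {set 'I_n}}) : R :=
  p ^+ #|E| * (1 - p) ^+ (#|pairs n| - #|E|).

Lemma wgt_ge0 (R : numDomainType) (n : nat) (p : R) (E : {set {set 'I_n}}) : 0 <= p <= 1 -> 0 <= wgt p E :> R.
Proof.
case/andP=> p0 p1; rewrite /wgt mulr_ge0 // exprn_ge0 //; by rewrite subr_ge0.
Qed.

Lemma union_bound (R : numDomainType) (n : nat) (p : R) (Bad : pred {set {set 'I_n}}) :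
  0 <= p <= 1 -> (forall F, Bad F -> F \subset pairs n) ->
  \sum_(E in powerset (pairs n) | [exists F, Bad F && (F \subset E)]) wgt p E
  <= \sum_(F | Bad F) p ^+ #|F|.
Proof.
move=> hp Bsub.
apply: (le_trans (y := \sum_(E in powerset (pairs n)) \sum_(F | Bad F && (F \subset E)) wgt p E)).
  rewrite big_mkcondr; apply: ler_sum => E _.
  case: ifP => [/existsP[F0 hF0]|_]; last by apply: sumr_ge0 => F _; exact: wgt_ge0.
  rewrite (bigD1 F0) //= lerDl; apply: sumr_ge0 => F _; exact: wgt_ge0.
rewrite (exchange_big_dep (fun F => Bad F)) /=; last by move=> E F _ /andP[].
apply: ler_sum => F bF.
rewrite (eq_bigl (fun E => (E \in powerset (pairs n)) && (F \subset E))); last first.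
  by move=> E; rewrite bF.
rewrite /wgt sum_supsets //; exact: Bsub.
Qed.

Lemma sum_x_card (R : comPzRingType) (n : nat) (x : R) :
  \sum_(W : {set 'I_n}) x ^+ #|W| = (1 + x) ^+ n.
Proof.
have := sum_subsets [set: 'I_n] (fun k => x ^+ k).
rewrite cardsT card_ord => h.
rewrite exprDn (eq_bigr (fun i : 'I_n.+1 => x ^+ i *+ 'C(n, i))); last by move=> i _; rewrite expr1n mul1r.
by rewrite -h; apply: eq_bigl => W; rewrite powersetE subsetT.
Qed.

Lemma count_bound (R : numDomainType) (n : nat) (x : R) (M : nat) (P : pred {set {set 'I_n}}) :
  0 <= x -> (forall F, P F -> (#|verts F| <= M)%N) ->
  \sum_(F | P F) x ^+ #|verts F| <= (2 ^ (2 ^ M))%:R * (1 + x) ^+ n.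
Proof.
move=> x0 hP.
rewrite (partition_big (fun F => verts F) xpredT) //=.
apply: (le_trans (y := \sum_(W : {set 'I_n}) (2 ^ (2 ^ M))%:R * x ^+ #|W|)).
  apply: ler_sum => W _.
  rewrite (eq_bigr (fun _ => x ^+ #|W|)); last by move=> F /andP[_ /eqP ->].
  rewrite sumr_const -[X in X <= _]mulr_natl.
  apply: ler_wpM2r; first exact: exprn_ge0.
  rewrite ler_nat.
  case: (leqP #|W| M) => hW.
    apply: (leq_trans (n := #|powerset (powerset W)|)).
      apply: subset_leq_card; apply/subsetP => F; rewrite !inE => /andP[_ /eqP vF].
      rewrite ?powersetE; apply/subsetP => e eF; rewrite ?powersetE -vF.
      exact: verts_sub.
    by rewrite !card_powerset leq_pexp2l // leq_pexp2l.
  have -> : #|[pred F | P F && (verts F == W)]| = 0%N.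
    apply: eq_card0 => F; rewrite !inE; apply/negbTE/negP => /andP[PF /eqP vF].
    by have := hP F PF; rewrite vF; lia.
  by [].
by rewrite -mulr_sumr sum_x_card.
Qed.

Definition Badp (R : realType) (n : nat) (eps : R) (M : nat) : pred {set {set 'I_n}} :=
  fun F => [&& F \subset pairs n, (0 < #|F|)%N, (#|verts F| <= M)%N &
             (5 * #|verts F|)%:R <= (2 + 4 * eps) * (#|F|)%:R].

Lemma bad_bound (R : realType) (n : nat) (eps : R) (M : nat) : 0 < eps -> (1 <= n)%N ->
  \sum_(F | Badp (n := n) eps M F) ((n%:R : R) `^ (- (2/5 + eps))) ^+ #|F|
   <= (2 ^ (2 ^ M))%:R * expR 1 * ((n%:R : R) `^ (- (eps / 5))).
Proof.
move=> e0 n1.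
set N : R := n%:R.
have N1 : 1 <= N by rewrite /N ler1n.
have N0 : 0 < N by apply: lt_le_trans ltr01 N1.
set c := N `^ (- (eps / 5)).
have c0 : 0 <= c := powR_ge0 _ _.
apply: (le_trans (y := \sum_(F | Badp (n := n) eps M F) c * (N^-1) ^+ #|verts F|)).
  apply: ler_sum => F /and4P[_ e1 _ hb].
  rewrite -powR_mulrn ?powR_ge0 // -powRrM.
  rewrite exprVn -powR_invn ?(ltW N0) // /c -powRD; last by apply/implyP => _; rewrite gt_eqF.
  apply: ler_powR => //.
  have he : 1 <= (#|F|)%:R :> R by rewrite ler1n.
  move: hb; rewrite natrM => hb.
  nra.
rewrite -mulr_sumr [X in _ <= X]mulrC.
apply: ler_wpM2l => //.
apply: le_trans (count_bound (M := M) _ _) _.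
- by rewrite invr_ge0 ltW.
- by move=> F /and4P[].
apply: ler_wpM2l => //.
apply: (le_trans (y := expR (N^-1) ^+ n)).
  apply: lerXn2r; last exact: expR_ge1Dx.
  - by rewrite nnegrE addr_ge0 // invr_ge0 ltW.
  - by rewrite nnegrE expR_ge0.
by rewrite -expRM_natl -/N mulfV // gt_eqF.
Qed.

Lemma det_link (R : realType) (n : nat) (eps : R) (K : nat) (E : {set {set 'I_n}}) :
  0 < eps -> eps^-1 < K%:R -> E \subset pairs n ->
  ~~ [exists F, Badp eps (2 * (K + 4) + 2) F && (F \subset E)] -> ~ has_bad_chain E.
Proof.
move=> e0 hK Ep /existsPn nb.
have nbF (F : {set {set 'I_n}}) : F \subset E -> ~~ Badp eps (2 * (K + 4) + 2) F.
  by move=> FE; have := nb F; rewrite FE andbT.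
have hK' : 1 < eps * K%:R.
  have h1 : eps * eps^-1 < eps * K%:R by rewrite ltr_pM2l.
  by rewrite mulfV ?gt_eqF in h1.
apply: (no_chain (B := K + 4) (M := 2 * (K + 4) + 2)); [lia | lia | lia | |].
- move=> F FE hv h8.
  have FP : F \subset pairs n := subset_trans FE Ep.
  case: (posnP #|F|) => [/cards0_eq F0 | e1].
    by rewrite F0 /verts big_set0 cards0.
  have := nbF F FE; rewrite /Badp FP e1 hv /= => hr.
  have hr' : (2 + 4 * eps) * (#|F|)%:R < 5 * (#|verts F|)%:R :> R.
    by rewrite -natrM ltNge.
  have h8' : 5 * (#|verts F|)%:R <= 2 * (#|F|)%:R + 8 :> R.
    by rewrite -!natrM -natrD ler_nat.
  have he : 1 <= (#|F|)%:R :> R by rewrite ler1n.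
  suff : 5 * (#|verts F|)%:R < 4 * K%:R + 8 :> R.
    by rewrite -!natrM -natrD ltr_nat; set vv := #|verts F|; lia.
  set e := (#|F|)%:R in hr' h8' he *.
  set v := (#|verts F|)%:R in hr' h8' *.
  have q1 : eps * e < 2 by nra.
  have q2 : e < 2 * K%:R.
    have : e * 1 < e * (eps * K%:R) by rewrite ltr_pM2l //; lra.
    have : (eps * e) * K%:R <= 2 * K%:R by apply: ler_wpM2r; [rewrite ler0n | lra].
    nra.
  lra.
- move=> F FE hv hlt.
  apply: (negP (nbF F FE)).
  rewrite /Badp (subset_trans FE Ep) hv /=.
  apply/andP; split; first by move: hlt; set ee := #|F|; lia.
  have h : 5 * (#|verts F|)%:R <= 2 * (#|F|)%:R :> R.
    by rewrite -!natrM ler_nat ltnW.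
  have he : 0 <= (#|F|)%:R :> R by [].
  suff : 5 * (#|verts F|)%:R <= (2 + 4 * eps) * (#|F|)%:R by rewrite -natrM; apply.
  nra.
Qed.

Lemma key_bounds (R : realType) (eps : R) (K n : nat) : 0 < eps -> eps^-1 < K%:R -> (1 <= n)%N ->
  let C := (2 ^ (2 ^ (2 * (K + 4) + 2)))%:R * expR 1 : R in
  let G := @gnp_prob R n ((n%:R : R) `^ (- (2 / 5 + eps))) (fun G => ~ has_bad_chain G) in
  1 - C * ((n%:R : R) `^ (- (eps / 5))) <= G /\ G <= 1.
Proof.
move=> e0 hK n1 C G.
set M := (2 * (K + 4) + 2)%N.
set p : R := (n%:R : R) `^ (- (2 / 5 + eps)).
have hp : 0 <= p <= 1.
  rewrite powR_ge0 /=.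
  have : p <= (n%:R : R) `^ 0 by apply: ler_powR; [rewrite ler1n | lra].
  by rewrite powRr0.
have tot : \sum_(E in powerset (pairs n)) wgt p E = 1 by rewrite /wgt sum_subsets_one.
have -> : G = \sum_(E | (E \in powerset (pairs n)) && `[< ~ has_bad_chain E >]) wgt p E by [].
split.
  rewrite -[X in X - _]tot (bigID (fun E : {set {set 'I_n}} =>
     [exists F, Badp eps M F && (F \subset E)])) /=.
  have Bs : forall F, Badp eps M F -> F \subset pairs n by move=> F /and4P[].
  have h1 := @union_bound R n p (Badp eps M) hp Bs.
  have h2 := @bad_bound R n eps M e0 n1.
  have h3 : \sum_(E | (E \in powerset (pairs n)) && ~~ [exists F, Badp eps M F && (F \subset E)])
               wgt p E <= \sum_(E | (E \in powerset (pairs n)) && `[< ~ has_bad_chain E >]) wgt p E.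
    apply: sum_filter_le => [E /andP[EP nex]|E /andP[EP _]]; last exact: wgt_ge0.
    rewrite EP /=; apply/asboolP; apply: (det_link e0 hK) => //.
    by rewrite -powersetE.
  rewrite -/p in h2.
  rewrite /C; lra.
rewrite -[X in _ <= X]tot.
apply: sum_filter_le.
- by move=> E /andP[].
- by move=> E _; exact: wgt_ge0.
Qed.


Unset Implicit Arguments.
Local Open Scope classical_set_scope.
Local Open Scope ring_scope.

Theorem claim7p9 (R : realType) :
  exists eps0 : R, 0 < eps0 /\
    forall eps : R, 0 < eps -> eps < eps0 ->
      (fun n : nat => @gnp_prob R n ((n%:R : R) `^ (- (2 / 5 + eps)))
                         (fun G => ~ has_bad_chain G)) @ \oo --> (1 : R).
Proof.
exists 1; split => // eps e0 _.
have [K hK] : exists K : nat, eps^-1 < K%:R.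
  by exists (Num.Def.archi_bound eps^-1); apply: archi_boundP; rewrite invr_ge0 ltW.
set C : R := (2 ^ (2 ^ (2 * (K + 4) + 2)))%:R * expR 1.
have C0 : 0 < C by rewrite mulr_gt0 ?expR_gt0 // ltr0n expn_gt0.
set a : R := eps / 5.
have a0 : 0 < a by rewrite divr_gt0.
apply/cvgrPdist_lt => e he.
have Ce0 : 0 < C / e by rewrite divr_gt0.
set r : R := Num.max 1 ((C / e) `^ a^-1).
near=> n.
have hr : r < n%:R by near: n; exact: nbhs_infty_gtr.
move: hr; rewrite /r gt_max => /andP[h1 h2].
have n1 : (1 <= n)%N by move: h1; rewrite -[1 : R]/(1%:R) ltr_nat => /ltnW.
have [k1 k2] := key_bounds e0 hK n1.
rewrite ger0_norm; last by rewrite subr_ge0.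
have N0 : 0 < (n%:R : R) by rewrite ltr0n.
have q : C / e < (n%:R : R) `^ a.
  have := gt0_ltr_powR a0 _ _ h2.
  rewrite -powRrM mulVf ?gt_eqF // powRr1 ?ltW //.
  apply; rewrite nnegrE ?powR_ge0 // ltW //.
have q2 : C * (n%:R : R) `^ (- a) < e.
  rewrite powRN -[X in X < _]/(C / (n%:R `^ a)) ltr_pdivrMr ?powR_gt0 //.
  by rewrite mulrC -(ltr_pdivrMr _ _ he).
rewrite -/a in k1.
rewrite -/C in k1; lra.
Unshelve. all: end_near.
Qed.
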